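(* Let $H$ be a real Hilbert space, $A:H\to2^H$ maximal monotone with $\mathrm{zer}A\ne\emptyset$, $(\gamma_n)$ a sequence in $(0,\infty)$ with $\sum_n\gamma_n^2=\infty$ and rate of divergence $\theta$, $x_0\in H$, $x_{n+1}=J_{\gamma_nA}x_n$, and $b>0$ with $b\ge\|x_0-p\|$ for some $p\in\mathrm{zer}A$. For $k\in\mathbb{N}$ let $m_k=\max_{0\le i\le k}\gamma_i$ and $M_k=\lceil(k+1)(2+m_k)\rceil-1$. Then for every $k\in\mathbb{N}$ there exists $N\le\Phi(k,m_k,\theta,b):=\theta\big(\lceil b^2(M_k+1)^2\rceil\big)\lceil b^2(M_k+1)^2\rceil-1$ such that $\|x_N-J_{\gamma_iA}x_N\|\le\frac1{k+1}$ for all $i\le k$ (i.e. $x_N\in AF_k$).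
   Context: $J_{\gamma A}:=(Id+\gamma A)^{-1}$ is the resolvent of $\gamma A$. $AF_k:=\bigcap_{i\le k}\{x\in H\mid\|x-J_{\gamma_iA}x\|\le\frac1{k+1}\}$. A rate of divergence for $\sum\gamma_n^2$ is $\theta:\mathbb{N}\to\mathbb{N}$ with $\sum_{i=0}^{\theta(n)}\gamma_i^2\ge n$ for all $n$. *)

(* Defs.v *)
From HB Require Import structures.
From mathcomp Require Import all_boot all_order all_algebra.
From mathcomp Require Import all_classical all_reals all_analysis.
Set Implicit Arguments. Unset Strict Implicit. Unset Printing Implicit Defensive.
Import Order.TTheory GRing.Theory Num.Theory.
Import numFieldNormedType.Exports.
Local Open Scope classical_set_scope.
Local Open Scope ring_scope.

(* ip is a (real) inner product on V inducing the norm of V.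
   A real Hilbert space is a complete normed space V with such an ip. *)
Definition is_inner_product (R : realType) (V : normedModType R)
  (ip : V -> V -> R) : Prop :=
  [/\ (forall x y, ip x y = ip y x),
      (forall (a : R) (x y z : V), ip (a *: x + y) z = a * ip x z + ip y z)
    & (forall x, ip x x = `|x| ^+ 2)].

(* Set-valued operators A : H -> 2^H; u \in A x is written A x u. *)
Definition monotone_op (R : realType) (V : normedModType R)
  (ip : V -> V -> R) (A : V -> set V) : Prop :=
  forall x y u v, A x u -> A y v -> 0 <= ip (x - y) (u - v).

Definition maximal_monotone (R : realType) (V : normedModType R)
  (ip : V -> V -> R) (A : V -> set V) : Prop :=
  monotone_op ip A /\
  forall B : V -> set V, monotone_op ip B ->
    (forall x u, A x u -> B x u) -> forall x u, B x u -> A x u.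

Definition zer (R : realType) (V : normedModType R) (A : V -> set V) : set V :=
  [set p | A p 0].

(* resolvent J_{g A} x = (Id + g A)^{-1} x : the (for maximal monotone A and
   g > 0, unique) y with x \in y + g A y, chosen by classical choice. *)
Definition resolvent (R : realType) (V : normedModType R)
  (A : V -> set V) (g : R) (x : V) : V :=
  xget x [set y | exists2 u, A y u & x = y + g *: u].

Definition AF (R : realType) (V : normedModType R)
  (A : V -> set V) (gamma : nat -> R) (k : nat) : set V :=
  [set x | forall i, (i <= k)%N ->
     `|x - resolvent A (gamma i) x| <= (k.+1%:R)^-1].

Definition rate_of_divergence (R : realType) (gamma : nat -> R)
  (theta : nat -> nat) : Prop :=
  forall n : nat, n%:R <= \sum_(0 <= i < (theta n).+1) gamma i ^+ 2.

Definition ceiln (R : realType) (r : R) : nat := `|Num.ceil r|%N.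

Definition mk (R : realType) (gamma : nat -> R) (k : nat) : R :=
  \big[Num.max/0]_(0 <= i < k.+1) gamma i.

Definition Mk (R : realType) (gamma : nat -> R) (k : nat) : nat :=
  (ceiln (k.+1%:R * (2 + mk gamma k)) - 1)%N.

(* Phi(k, m_k, theta, b) = theta(ceil(b^2 (M_k+1)^2)) * ceil(b^2 (M_k+1)^2) - 1
   (natural-number, truncated subtraction) *)
Definition Phi (R : realType) (gamma : nat -> R) (theta : nat -> nat)
  (b : R) (k : nat) : nat :=
  let c := ceiln (b ^+ 2 * ((Mk gamma k).+1%:R) ^+ 2) in
  (theta c * c - 1)%N.

(* Main.v *)
Require Import Defs.
From HB Require Import structures.
From mathcomp Require Import all_boot all_order all_algebra.
From mathcomp Require Import all_classical all_reals all_analysis.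
From mathcomp Require Import ring lra zify.
Import Order.TTheory GRing.Theory Num.Theory.
Import numFieldNormedType.Exports.
Local Open Scope classical_set_scope.
Local Open Scope ring_scope.

Set Implicit Arguments.
Section IP.
Variables (R : realType) (H : normedModType R) (ip : H -> H -> R).
Hypothesis hip : is_inner_product ip.

Lemma ipC x y : ip x y = ip y x. Proof. by case: hip. Qed.
Lemma ipL a x y z : ip (a *: x + y) z = a * ip x z + ip y z. Proof. by case: hip. Qed.
Lemma ipN2 x : ip x x = `|x| ^+ 2. Proof. by case: hip. Qed.
Lemma ipDl x y z : ip (x + y) z = ip x z + ip y z.
Proof. by rewrite -[x]scale1r ipL mul1r scale1r. Qed.
Lemma ip0l z : ip 0 z = 0.
Proof. have := ipDl 0 0 z; rewrite addr0 => h; lra. Qed.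
Lemma ipZl a x z : ip (a *: x) z = a * ip x z.
Proof. by rewrite -[a *: x]addr0 ipL ip0l addr0. Qed.
Lemma ipNl x z : ip (- x) z = - ip x z.
Proof. by rewrite -scaleN1r ipZl mulN1r. Qed.
Lemma ipBl x y z : ip (x - y) z = ip x z - ip y z.
Proof. by rewrite ipDl ipNl. Qed.
Lemma ipDr x y z : ip z (x + y) = ip z x + ip z y.
Proof. by rewrite ipC ipDl !(ipC _ z). Qed.
Lemma ipZr a x z : ip z (a *: x) = a * ip z x.
Proof. by rewrite ipC ipZl ipC. Qed.
Lemma ipNr x z : ip z (- x) = - ip z x.
Proof. by rewrite ipC ipNl ipC. Qed.
Lemma ipBr x y z : ip z (x - y) = ip z x - ip z y.
Proof. by rewrite ipDr ipNr. Qed.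
Lemma ip0r z : ip z 0 = 0. Proof. by rewrite ipC ip0l. Qed.

Lemma nD2 x y : `|x + y| ^+ 2 = `|x| ^+ 2 + 2 * ip x y + `|y| ^+ 2.
Proof. rewrite -!ipN2 ipDl !ipDr (ipC y x). ring. Qed.
Lemma nB2 x y : `|x - y| ^+ 2 = `|x| ^+ 2 - 2 * ip x y + `|y| ^+ 2.
Proof. rewrite -!ipN2 ipBl !ipBr (ipC y x). ring. Qed.

Lemma nconv (t : R) (a b : H) : `|(1 - t) *: a + t *: b| ^+ 2 =
  (1 - t) * `|a| ^+ 2 + t * `|b| ^+ 2 - t * (1 - t) * `|a - b| ^+ 2.
Proof.
rewrite -!ipN2 !ipDl !ipDr !ipZl !ipZr !ipNl !ipNr (ipC b a). ring.
Qed.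

Lemma ip_le (x y : H) : 2 * ip x y <= `|x| ^+ 2 + `|y| ^+ 2.
Proof. have := nB2 x y. have := sqr_ge0 `|x - y|. lra. Qed.

End IP.

Lemma small_inv (R : realType) (d : R) : 0 < d -> exists N : nat, (N.+1%:R)^-1 < d.
Proof.
move=> d0; exists (Num.Def.archi_bound (d^-1)).
have di0 : 0 < d^-1 by rewrite invr_gt0.
have h := archi_boundP (ltW di0).
set q := (Num.Def.archi_bound d^-1).+1%:R.
have hq : (Num.Def.archi_bound d^-1)%:R < q by rewrite /q ltr_nat.
have q0 : 0 < q by rewrite /q ltr0Sn.
have e1 : d * d^-1 = 1 by rewrite mulfV // gt_eqF.
have e2 : q * q^-1 = 1 by rewrite mulfV // gt_eqF.
have qi0 : 0 < q^-1 by rewrite invr_gt0.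
have h1 : d^-1 < q by exact: lt_trans h hq.
have h2 : 1 < d * q by rewrite -e1 ltr_pM2l.
have h3 : q^-1 * (d * q) = d by rewrite mulrCA mulVf ?mulr1 // gt_eqF.
have := h2; rewrite -(ltr_pM2l qi0) mulr1 h3 //.
Qed.

Lemma inv_mono (R : realType) (n N : nat) : (N <= n)%N -> (n.+1%:R)^-1 <= (N.+1%:R)^-1 :> R.
Proof.
move=> hn; rewrite lef_pV2 ?posrE ?ltr0Sn // ler_nat; exact: hn.
Qed.

Lemma cvx_aux (R : realType) (t p1 p2 r1 r2 : R) : 0 <= t -> t <= 1 ->
  p1 <= r1 -> p2 <= r2 -> (1 - t) * p1 + t * p2 <= (1 - t) * r1 + t * r2.
Proof. move=> *; nra. Qed.

Lemma cauchy_sq (R : realType) (H : completeNormedModType R) (g : nat -> H) :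
  (forall n k, `|g n - g k| ^+ 2 <= 4 * ((n.+1%:R)^-1 + (k.+1%:R)^-1)) ->
  cvg (g @ \oo).
Proof.
move=> hg; apply/cauchy_cvgP/cauchyP => e e0.
have e80 : 0 < e ^+ 2 / 8 by apply: divr_gt0 => //; apply: exprn_gt0.
have [N hN] := @small_inv _ _ e80.
exists (g N); exists N => // n /= hn.
rewrite -ball_normE /=.
have h1 := hg N n.
have h2 : (n.+1%:R^-1 : R) <= N.+1%:R^-1 by apply: inv_mono.
have h3 := normr_ge0 (g N - g n).
rewrite ltNge; apply/negP => c.
have : e ^+ 2 <= `|g N - g n| ^+ 2 by rewrite lerXn2r // ?nnegrE // ltW.
move=> h4.
move: h1 h2 hN h4.
set eN := (N.+1%:R^-1 : R); set en := (n.+1%:R^-1 : R).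
set s := `|g N - g n| ^+ 2; set E := e ^+ 2.
move=> *. lra.
Qed.

Lemma lim_le_sq (R : realType) (H : completeNormedModType R) (g1 g2 : nat -> H)
  (l1 l2 a b : H) (c1 c2 c3 m : R) :
  g1 @ \oo --> l1 -> g2 @ \oo --> l2 ->
  (forall n, 2^-1 * `|g1 n + a| ^+ 2 + 2^-1 * `|g2 n + b| ^+ 2 - c1 - c2 - c3 <= m + n.+1%:R^-1) ->
  2^-1 * `|l1 + a| ^+ 2 + 2^-1 * `|l2 + b| ^+ 2 - c1 - c2 - c3 <= m.
Proof.
move=> cv1 cv2 h; apply/ler_addgt0Pr => d d0.
have k1 : (fun n => `|g1 n + a|) @ \oo --> `|l1 + a|.
  apply: cvg_norm; exact: (cvgD cv1 (cvg_cst a)).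
have k2 : (fun n => `|g2 n + b|) @ \oo --> `|l2 + b|.
  apply: cvg_norm; exact: (cvgD cv2 (cvg_cst b)).
have K := cvgB (cvgB (cvgB (cvgD (@cvgMr _ _ _ _ _ (2^-1) _ (cvgM k1 k1)) (@cvgMr _ _ _ _ _ (2^-1) _ (cvgM k2 k2))) (cvg_cst c1)) (cvg_cst c2)) (cvg_cst c3).
rewrite !expr2; apply: (cvgr_to_le (K _ _ _ _ _ _ _ _ _ _ _)).
have [N hN] := @small_inv _ _ d0.
exists N => // n /= hn.
have h2 : (n.+1%:R^-1 : R) <= N.+1%:R^-1 by apply: inv_mono.
suff : 2^-1 * (`|g1 n + a| * `|g1 n + a|) + 2^-1 * (`|g2 n + b| * `|g2 n + b|) - c1 - c2 - c3 <= m + d by [].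
have := h n; rewrite !expr2 /=; move: h2 hN.
set eN := (N.+1%:R^-1 : R); set en := (n.+1%:R^-1 : R).
move=> *; lra.
Qed.

Section Minty.
Variables (R : realType) (H : completeNormedModType R) (ip : H -> H -> R).
Hypothesis hip : is_inner_product ip.
Variable A : H -> set H.
Hypothesis hA : maximal_monotone ip A.

Definition phi y v x u := 2^-1 * `|x + v| ^+ 2 + 2^-1 * `|u + y| ^+ 2
  - 2^-1 * `|v| ^+ 2 - 2^-1 * `|y| ^+ 2 - ip y v.

Lemma phiE y v x u : phi y v x u =
  ip x v + ip y u - ip y v + 2^-1 * `|x| ^+ 2 + 2^-1 * `|u| ^+ 2.
Proof. rewrite /phi !(nD2 hip) (ipC hip u y). lra. Qed.

Definition Gle x u r := forall y v, A y v -> phi y v x u <= r.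

Lemma max_add x u : (forall y v, A y v -> 0 <= ip (x - y) (u - v)) -> A x u.
Proof.
move=> h; case: hA => mon mx.
apply: (mx (fun z w => A z w \/ (z = x /\ w = u))); last by right.
- move=> z1 z2 w1 w2 [h1|[-> ->]] [h2|[-> ->]].
  + exact: mon.
  + rewrite -(opprB x z1) -(opprB u w1) (ipNl hip) (ipNr hip) opprK; exact: h.
  + exact: h.
  + by rewrite !subrr (ip0l hip).
- by move=> z w hz; left.
Qed.

Lemma ipBB x y u v : ip (x - y) (u - v) = ip x u - ip x v - ip y u + ip y v.
Proof. rewrite !(ipBl hip) !(ipBr hip). ring. Qed.

Lemma Gle_lb x u r : Gle x u r -> ip x u + 2^-1 * `|x| ^+ 2 + 2^-1 * `|u| ^+ 2 <= r.
Proof.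
move=> h; rewrite leNgt; apply/negP => hlt.
have hall : forall y v, A y v -> 0 <= ip (x - y) (u - v).
  move=> y v Ayv; rewrite leNgt; apply/negP => neg.
  have := h y v Ayv; rewrite phiE ipBB in neg *. lra.
have := h x u (max_add x u hall); rewrite phiE. lra.
Qed.

Lemma Gle_ge0 x u r : Gle x u r -> 0 <= r.
Proof.
move=> /Gle_lb h; have := nD2 hip x u; have := sqr_ge0 `|x + u|. lra.
Qed.

Lemma Gle_le x u r s : Gle x u r -> r <= s -> Gle x u s.
Proof. by move=> h rs y v Ayv; apply: le_trans (h y v Ayv) rs. Qed.

Lemma Gle_graph x u : A x u -> Gle x u (ip x u + 2^-1 * `|x| ^+ 2 + 2^-1 * `|u| ^+ 2).
Proof.
move=> Axu y v Ayv; rewrite phiE.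
case: hA => mon _; have := mon _ _ _ _ Axu Ayv; rewrite ipBB. lra.
Qed.

Lemma shift (t : R) (a b c : H) :
  (1 - t) *: a + t *: b + c = (1 - t) *: (a + c) + t *: (b + c).
Proof. by rewrite !scalerDr addrACA -scalerDl subrK scale1r. Qed.

Lemma dsub (a b c : H) : (a + c) - (b + c) = a - b.
Proof. by rewrite opprD addrACA subrr addr0. Qed.

Definition dist2 (a b c d : H) := `|a - b| ^+ 2 + `|c - d| ^+ 2.

Lemma Gle_conv x1 u1 r1 x2 u2 r2 (t : R) : 0 <= t -> t <= 1 ->
  Gle x1 u1 r1 -> Gle x2 u2 r2 ->
  Gle ((1 - t) *: x1 + t *: x2) ((1 - t) *: u1 + t *: u2)
    ((1 - t) * r1 + t * r2 - 2^-1 * (t * (1 - t)) * dist2 x1 x2 u1 u2).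
Proof.
move=> t0 t1 h1 h2 y v Ayv.
have := h1 y v Ayv; have := h2 y v Ayv.
rewrite /phi /dist2 !shift !(nconv hip) !dsub.
set a1 := `|x1 + v| ^+ 2; set a2 := `|x2 + v| ^+ 2.
set b1 := `|u1 + y| ^+ 2; set b2 := `|u2 + y| ^+ 2.
move=> e2 e1.
have := @cvx_aux R t _ _ _ _ t0 t1 e1 e2.
lra.
Qed.

Hypothesis hne : exists y0 v0, A y0 v0.

Lemma minty0 : exists y v, A y v /\ y + v = 0.
Proof.
set S := [set r | exists x u, Gle x u r].
have Sne : S !=set0.
  case: hne => y0 [v0 h]; eexists; exists y0, v0; exact: Gle_graph h.
have Slb : lbound S 0 by move=> r [x [u h]]; exact: Gle_ge0 h.
have hinf : has_inf S by split; [exact: Sne | exists 0].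
set m := inf S.
have mle : forall x u r, Gle x u r -> m <= r.
  move=> x u r h; apply: (ge_inf (proj2 hinf)); exists x, u; exact: h.
have sq : forall n : nat, exists p : H * H, Gle p.1 p.2 (m + (n.+1%:R)^-1).
  move=> n; have [r [x [u hr]] lt] := @inf_adherent _ S (n.+1%:R)^-1 (ltac:(by rewrite invr_gt0 ltr0Sn)) hinf.
  exists (x, u); apply: Gle_le hr _; exact: ltW.
have [f hf] := choice sq.
set xs := fun n => (f n).1; set us := fun n => (f n).2.
have key : forall n k, dist2 (xs n) (xs k) (us n) (us k)
    <= 4 * ((n.+1%:R)^-1 + (k.+1%:R)^-1).
  move=> n k.
  have h2 : (0:R) <= 2^-1 by lra.
  have h3 : (2^-1:R) <= 1 by lra.
  have := mle _ _ _ (Gle_conv (2^-1) h2 h3 (hf n) (hf k)).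
  have e : 1 - 2^-1 = 2^-1 :> R by lra.
  rewrite e /xs /us /=.
  set en := n.+1%:R^-1; set ek := k.+1%:R^-1.
  have q : (2^-1 * (2^-1 / 2) : R) = 8^-1 by rewrite -!invfM; congr (_^-1); rewrite -!natrM.
  rewrite q. lra.
have keyx : forall n k, `|xs n - xs k| ^+ 2 <= 4 * ((n.+1%:R)^-1 + (k.+1%:R)^-1).
  move=> n k; move: (key n k) (sqr_ge0 `|us n - us k|); rewrite /dist2.
  set s1 := `|xs n - xs k| ^+ 2; set s2 := `|us n - us k| ^+ 2.
  set en := (n.+1%:R^-1 : R); set ek := (k.+1%:R^-1 : R).
  move=> *; lra.
have keyu : forall n k, `|us n - us k| ^+ 2 <= 4 * ((n.+1%:R)^-1 + (k.+1%:R)^-1).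
  move=> n k; move: (key n k) (sqr_ge0 `|xs n - xs k|); rewrite /dist2.
  set s1 := `|xs n - xs k| ^+ 2; set s2 := `|us n - us k| ^+ 2.
  set en := (n.+1%:R^-1 : R); set ek := (k.+1%:R^-1 : R).
  move=> *; lra.
have cx := @cauchy_sq _ _ _ keyx; have cu := @cauchy_sq _ _ _ keyu.
set xb := lim (xs @ \oo); set ub := lim (us @ \oo).
have Gb : Gle xb ub m.
  move=> y v Ayv; rewrite /phi.
  apply: (@lim_le_sq _ _ _ _ _ _ _ _ _ _ _ _ cx cu) => n; exact: (hf n y v Ayv).
have lbm := Gle_lb Gb.
have opt : forall x u, A x u ->
    m <= ip x u + 2^-1 * `|x| ^+ 2 + 2^-1 * `|u| ^+ 2 - 2^-1 * dist2 xb x ub u.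
  move=> x u Axu.
  have ht : forall t : R, 0 < t -> t <= 1 ->
      m <= ip x u + 2^-1 * `|x| ^+ 2 + 2^-1 * `|u| ^+ 2 - 2^-1 * (1 - t) * dist2 xb x ub u.
    move=> t t0 t1; move: (mle _ _ _ (Gle_conv t (ltW t0) t1 Gb (Gle_graph Axu))).
    set rw := ip x u + _ + _; set D := dist2 xb x ub u.
    move=> h; rewrite -(ler_pM2l t0).
    have e : t * (rw - 2^-1 * (1 - t) * D) = (1 - t) * m + t * rw - 2^-1 * (t * (1 - t)) * D - (1 - t) * m by ring.
    rewrite e; have e2 : t * m = m - (1 - t) * m by ring.
    rewrite e2; lra.
  set rw := ip x u + _ + _ in ht *; set D := dist2 xb x ub u in ht *.
  have D0 : 0 <= D by rewrite /D /dist2 addr_ge0 ?sqr_ge0.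
  apply/ler_addgt0Pr => e e0.
  have eD0 : 0 < e + D by lra.
  set t := e / (e + D).
  have t0 : 0 < t by rewrite /t divr_gt0.
  have te : t * (e + D) = e by rewrite /t mulfVK // gt_eqF.
  have t1 : t <= 1 by rewrite /t ler_pdivrMr // mul1r; lra.
  have := ht t t0 t1.
  nra.
have key2 : forall x u, A x u -> `|xb + ub| ^+ 2 <= ip (x + ub) (u + xb).
  move=> x u Axu; have := opt x u Axu; move: lbm.
  rewrite /dist2 !(nB2 hip) !(nD2 hip) !(ipDl hip) !(ipDr hip).
  have := ipC hip x xb; have := ipC hip ub xb; have := ipC hip u ub.
  move=> *; lra.
have Aq : A (- ub) (- xb).
  apply: max_add => y v Ayv; rewrite -!opprD (ipNl hip) (ipNr hip) opprK (addrC ub y) (addrC xb v); have := key2 y v Ayv.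
  have := sqr_ge0 `|xb + ub|; lra.
have := key2 _ _ Aq; rewrite !addNr (ip0l hip) => h0.
have hz : xb + ub = 0.
  apply/normr0_eq0/eqP; rewrite -sqrf_eq0 eq_le h0 sqr_ge0 //.
exists (- ub), (- xb); split => //.
by rewrite -opprD addrC hz oppr0.
Qed.

End Minty.

Lemma resolvent_spec (R : realType) (H : completeNormedModType R) (ip : H -> H -> R)
  (A : H -> set H) (g : R) (z : H) :
  is_inner_product ip -> maximal_monotone ip A -> (exists y v, A y v) -> 0 < g ->
  exists2 u, A (resolvent A g z) u & z = resolvent A g z + g *: u.
Proof.
move=> hip hA hne g0.
suff [y [u [Ayu e]]] : exists y u, A y u /\ z = y + g *: u.
  have := @xgetPex _ z [set y | exists2 u, A y u & z = y + g *: u].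
  by rewrite /resolvent; apply; exists y, u.
pose B := fun y w => exists u, A (y + z) u /\ w = g *: u.
case: (hA) => monA mxA.
have hB : maximal_monotone ip B.
  split.
    move=> y1 y2 w1 w2 [u1 [h1 ->]] [u2 [h2 ->]].
    have := monA _ _ _ _ h1 h2; rewrite dsub -scalerBr (ipZr hip) => h.
    by apply: mulr_ge0 => //; apply: ltW.
  move=> C monC incl y w Cyw.
  pose C' := fun y u => C (y - z) (g *: u).
  have monC' : monotone_op ip C'.
    move=> y1 y2 u1 u2 h1 h2; have := monC _ _ _ _ h1 h2.
    by rewrite dsub -scalerBr (ipZr hip) pmulr_rge0.
  have inc' : forall y u, A y u -> C' y u.
    move=> y1 u1 Ayu; apply: incl; exists u1; split => //; by rewrite subrK.
  have gV : g * g^-1 = 1 by rewrite mulfV // gt_eqF.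
  have := mxA C' monC' inc' (y + z) (g^-1 *: w).
  rewrite /C' addrK scalerA gV scale1r => /(_ Cyw) hA'.
  by exists (g^-1 *: w); split => //; rewrite scalerA gV scale1r.
have hneB : exists y w, B y w.
  case: hne => y0 [v0 h0]; exists (y0 - z), (g *: v0), v0; split => //.
  by rewrite subrK.
have [y [w [[u [Au ->]] e]]] := minty0 hip hB hneB.
exists (y + z), u; split => //.
by rewrite -addrA (addrC z) addrA e add0r.
Qed.

Lemma mono_step (R : realType) (H : normedModType R) (ip : H -> H -> R)
  (A : H -> set H) (g : R) y y' u v :
  is_inner_product ip -> monotone_op ip A -> 0 < g -> A y u -> A y' v ->
  y = y' + g *: v -> `|v| ^+ 2 <= `|u| ^+ 2.
Proof.
move=> hip mon g0 Ayu Ayv e.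
have := mon _ _ _ _ Ayu Ayv.
rewrite e addrAC subrr add0r (ipZl hip) (ipBr hip) (ipN2 hip) pmulr_rge0 // subr_ge0 => h.
have := ip_le hip v u; lra.
Qed.

Lemma res_sq (R : realType) (H : completeNormedModType R) (ip : H -> H -> R)
  (A : H -> set H) (g : R) x a :
  is_inner_product ip -> maximal_monotone ip A -> 0 < g -> A x a ->
  `|x - resolvent A g x| ^+ 2 <= g ^+ 2 * `|a| ^+ 2.
Proof.
move=> hip hA g0 Axa.
have [u Au e] := @resolvent_spec R H ip A g x hip hA (ex_intro _ x (ex_intro _ a Axa)) g0.
have -> : x - resolvent A g x = g *: u by rewrite {1}e addrAC subrr add0r.
rewrite normrZ (gtr0_norm g0) exprMn ler_wpM2l ?sqr_ge0 //.
exact: mono_step hip (proj1 hA) g0 Axa Au e.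
Qed.

Lemma res_p (R : realType) (H : completeNormedModType R) (ip : H -> H -> R)
  (A : H -> set H) (g : R) x p :
  is_inner_product ip -> maximal_monotone ip A -> 0 < g -> A p 0 ->
  `|x - resolvent A g x| ^+ 2 + `|resolvent A g x - p| ^+ 2 <= `|x - p| ^+ 2.
Proof.
move=> hip hA g0 Ap.
have [u Au e] := @resolvent_spec R H ip A g x hip hA (ex_intro _ p (ex_intro _ 0 Ap)) g0.
set y := resolvent A g x in Au e *.
have -> : x - y = g *: u by rewrite {1}e addrAC subrr add0r.
have -> : x - p = (y - p) + g *: u by rewrite {1}e addrAC.
rewrite (nD2 hip (y - p)) (ipZr hip).
have := (proj1 hA) _ _ _ _ Au Ap; rewrite subr0 => h.
have := mulr_ge0 (ltW g0) h; lra.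
Qed.

Lemma big_max_ge (R : realType) (F : nat -> R) (s : seq nat) i :
  i \in s -> F i <= \big[Num.max/0]_(j <- s) F j.
Proof.
elim: s => // x s IH; rewrite inE big_cons => /orP [/eqP ->|/IH h].
  by rewrite le_max lexx.
by rewrite le_max h orbT.
Qed.

Lemma big_max_ge0 (R : realType) (F : nat -> R) (s : seq nat) :
  0 <= \big[Num.max/0]_(j <- s) F j.
Proof.
elim: s => [|x s IH]; first by rewrite big_nil.
by rewrite big_cons le_max IH orbT.
Qed.

Lemma sq_fin (R : realType) (d K : R) : 0 < K -> 0 <= d -> d ^+ 2 * K ^+ 2 <= 1 -> d <= K^-1.
Proof.
move=> K0 d0 h; rewrite -div1r ler_pdivlMr //.
rewrite leNgt; apply/negP => c; nra.
Qed.

Unset Implicit Arguments.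

Theorem theorem8p4 (R : realType) (H : completeNormedModType R)
  (ip : H -> H -> R) (A : H -> set H) (gamma : nat -> R)
  (theta : nat -> nat) (x : nat -> H) (b : R) :
  is_inner_product ip ->
  maximal_monotone ip A ->
  zer A !=set0 ->
  (forall n, 0 < gamma n) ->
  (\sum_(0 <= i < n) gamma i ^+ 2) @[n --> \oo] --> +oo ->
  rate_of_divergence gamma theta ->
  (forall n, x n.+1 = resolvent A (gamma n) (x n)) ->
  0 < b ->
  (exists2 p, p \in zer A & `|x 0%N - p| <= b) ->
  forall k : nat, exists N : nat,
    (N <= Phi gamma theta b k)%N /\ x N \in AF A gamma k.
Proof.
move=> hip hA _ gpos _ hrate hx b0 [p hp hb] k.
have Ap : A p 0 by move: hp; rewrite inE.
have hne : exists y v, A y v by exists p, 0.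
have step : forall n, exists u, A (x n.+1) u /\ x n = x n.+1 + gamma n *: u.
  move=> n; have [u Au e] := @resolvent_spec R H ip A (gamma n) (x n) hip hA hne (gpos n).
  by exists u; rewrite hx.
have [u hu] := choice step.
have fej : forall n, `|x n.+1 - p| ^+ 2 + gamma n ^+ 2 * `|u n| ^+ 2 <= `|x n - p| ^+ 2.
  move=> n; have := @res_p R H ip A (gamma n) (x n) p hip hA (gpos n) Ap.
  rewrite -hx.
  have -> : x n - x n.+1 = gamma n *: u n by rewrite {1}(proj2 (hu n)) addrAC subrr add0r.
  rewrite normrZ gtr0_norm ?gpos // exprMn; lra.
have mono : forall n, `|u n.+1| ^+ 2 <= `|u n| ^+ 2.
  move=> n; exact: (@mono_step R H ip A (gamma n.+1) _ _ _ _ hip (proj1 hA) (gpos n.+1) (proj1 (hu n)) (proj1 (hu n.+1)) (proj2 (hu n.+1))).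
have monoT : forall n T, (n <= T)%N -> `|u T| ^+ 2 <= `|u n| ^+ 2.
  move=> n T /subnK <-; elim: (T - n)%N => [|d IH]; first by rewrite add0n.
  rewrite addSn; exact: le_trans (mono _) IH.
have sum : forall N, \sum_(0 <= n < N) gamma n ^+ 2 * `|u n| ^+ 2 + `|x N - p| ^+ 2 <= `|x 0%N - p| ^+ 2.
  elim => [|N IH]; first by rewrite big_geq // add0r.
  rewrite big_nat_recr //=; move: IH (fej N).
  set S := \sum_(0 <= n < N) _; set a := `|x N.+1 - p| ^+ 2; set a0 := `|x N - p| ^+ 2.
  move=> *; lra.
have sumT : forall T, `|u T| ^+ 2 * \sum_(0 <= n < T.+1) gamma n ^+ 2 <= b ^+ 2.
  move=> T; rewrite mulr_sumr.
  apply: (@le_trans _ _ (\sum_(0 <= n < T.+1) gamma n ^+ 2 * `|u n| ^+ 2)).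
    apply: ler_sum_nat => n /andP [_ hn]; rewrite mulrC ler_wpM2l ?sqr_ge0 //.
    by apply: monoT.
  have := sum T.+1; have := sqr_ge0 `|x T.+1 - p|.
  have : `|x 0%N - p| ^+ 2 <= b ^+ 2 by rewrite lerXn2r ?nnegrE // ltW.
  set S := \sum_(0 <= n < T.+1) _; set a := `|x T.+1 - p| ^+ 2; set a0 := `|x 0%N - p| ^+ 2.
  move=> *; lra.
set m := mk gamma k.
have m0 : 0 <= m by exact: big_max_ge0.
have gm : forall i, (i <= k)%N -> gamma i <= m.
  by move=> i hi; apply: big_max_ge; rewrite mem_index_iota.
set K := k.+1%:R : R.
have K1 : 1 <= K by rewrite /K ler1n.
set s := K * (2 + m).
have s2 : 2 <= s by rewrite /s; nra.
have cge : forall r : R, 0 <= r -> r <= (ceiln r)%:R.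
  move=> r r0; rewrite /ceiln natr_absz ger0_norm; [exact: ceil_ge | rewrite ceil_ge0; lra].
have cs1 : (0 < ceiln s)%N.
  by rewrite -(ltr_nat R); apply: lt_le_trans (cge s _); lra.
set q := (Mk gamma k).+1%:R : R.
have qs : s <= q by rewrite /q /Mk subn1 prednK //; apply: cge; lra.
rewrite /Phi /=.
set c := ceiln (b ^+ 2 * q ^+ 2).
have hc : b ^+ 2 * q ^+ 2 <= c%:R by apply: cge; rewrite mulr_ge0 ?sqr_ge0.
have K0 : 0 < K by lra.
have [hb1 | hb1] := leP (b * K) 1.
  exists 0%N; split => //; rewrite inE => i hi.
  have := @res_p R H ip A (gamma i) (x 0%N) p hip hA (gpos i) Ap.
  move=> h; rewrite -/K; apply: (@sq_fin R _ K K0 (normr_ge0 _)); move: h.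
  have := sqr_ge0 `|resolvent A (gamma i) (x 0%N) - p|.
  have : `|x 0%N - p| ^+ 2 <= b ^+ 2 by rewrite lerXn2r ?nnegrE // ltW.
  have : (b * K) ^+ 2 <= 1 by rewrite -[1](expr1n _ 2) lerXn2r ?nnegrE // mulr_ge0 // ltW.
  rewrite exprMn.
  set d := `|x 0%N - resolvent A (gamma i) (x 0%N)|.
  set a := `|resolvent A (gamma i) (x 0%N) - p| ^+ 2; set a0 := `|x 0%N - p| ^+ 2.
  have := sqr_ge0 K; have := sqr_ge0 b.
  move=> *; nra.
have bq : 2 + m < b * q.
  have : b * s <= b * q by rewrite ler_wpM2l // ltW.
  rewrite /s; nra.
have c4 : 4 < c%:R :> R.
  have : (2 + m) ^+ 2 < (b * q) ^+ 2 by rewrite ltrXn2r ?nnegrE //; lra.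
  rewrite exprMn; nra.
have c5 : (4 < c)%N by rewrite -(ltr_nat R).
set T := theta c.
have hr := hrate c; rewrite -/T in hr.
have T1 : (0 < T)%N.
  rewrite lt0n; apply/negP => /eqP T0; move: hr; rewrite T0 big_nat1.
  have g0m := gm 0%N (leq0n _); have g00 := gpos 0%N.
  have : gamma 0%N ^+ 2 <= m ^+ 2 by rewrite lerXn2r ?nnegrE // ltW.
  have : (2 + m) ^+ 2 < (b * q) ^+ 2 by rewrite ltrXn2r ?nnegrE //; lra.
  have : m ^+ 2 <= (2 + m) ^+ 2 by rewrite lerXn2r ?nnegrE //; lra.
  move: hc; rewrite exprMn.
  set C := c%:R; set G := gamma 0%N ^+ 2; set B := b ^+ 2 * q ^+ 2.
  move=> *; lra.
exists T.+1; split; first by move: T1 c5; rewrite -/T; nia.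
rewrite inE => i hi.
have h1 := @res_sq R H ip A (gamma i) (x T.+1) (u T) hip hA (gpos i) (proj1 (hu T)).
have h2 := sumT T; rewrite -/T in h2.
rewrite -/K; apply: (@sq_fin R _ K K0 (normr_ge0 _)).
move: h1 h2 hr.
set D := `|x T.+1 - resolvent A (gamma i) (x T.+1)|.
set U := `|u T| ^+ 2; set S := \sum_(0 <= n < T.+1) _.
move=> h1 h2 hr.
have U0 : 0 <= U by apply: sqr_ge0.
have gi := gm i hi; have gi0 := gpos i.
have e1 : U * q ^+ 2 <= 1.
  have : b ^+ 2 * (U * q ^+ 2) <= b ^+ 2 * 1.
    have : U * (b ^+ 2 * q ^+ 2) <= U * S by rewrite ler_wpM2l //; apply: le_trans hc hr.
    lra.
  by rewrite ler_pM2l // exprn_gt0.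
have e2 : K * gamma i <= q.
  have : K * gamma i <= K * m by rewrite ler_wpM2l // ltW.
  rewrite /s in qs; lra.
have e3 : (K * gamma i) ^+ 2 <= q ^+ 2 by rewrite lerXn2r ?nnegrE // ?mulr_ge0 // ltW //; lra.
have e4 : D ^+ 2 * K ^+ 2 <= gamma i ^+ 2 * U * K ^+ 2 by rewrite ler_wpM2r ?sqr_ge0.
have e5 : (K * gamma i) ^+ 2 * U <= q ^+ 2 * U by rewrite ler_wpM2r.
have e6 : (K * gamma i) ^+ 2 * U = gamma i ^+ 2 * U * K ^+ 2 by rewrite exprMn; ring.
lra.
Qed.
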